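(* Let $\alpha>0$. The parallel algorithm ParPolyPA (described in the context) samples each host $h$ with probability $\deg(h)^\alpha/W$, i.e., for every index $i$, the host of the $i$-th sample equals node $h$ with probability $\deg_i(h)^\alpha/W_i$, where $\deg_i$ and $W_i$ refer to the graph on which sample $i$ is to be drawn (the graph containing all earlier samples).
   Context: Polynomial preferential attachment: start from a seed graph $G_0$ with $n_0$ nodes; new nodes arrive one at a time, each attached to one earlier node (host) chosen with probability proportional to $\deg(h)^\alpha$. For a sample index $i$, let $\deg_i(v)$, $W_i=\sum_v\deg_i(v)^\alpha$, $n_i$ and $\Delta_i$ (maximum degree) refer to the graph on which the $i$-th host is to be drawn. Proposal lists: the algorithm stores a list $P$ of nodes with multiplicities $c(v)$, and $w(v)=\deg(v)^\alpha/c(v)$, maintained as follows: initially each seed node $v$ appears $\lceil\deg_0(v)^\alpha n_0/W_0\rceil$ times; a host is drawn from a distribution by choosing a uniform random position of (the relevant part of) $P$ and accepting via rejection sampling; after adding a new node it is appended once and its host $h$ is appended while $w(h)$ exceeds the current value $W/n$. ParPolyPA processes the samples in batches. Let $s$ be the index of the first sample of a batch, and define $W_i'=W_s+2(i-s)$ if $\alpha\le 1$ and $W_i'=W_s+2\big((\Delta_s+i-s)^\alpha-\Delta_s^\alpha\big)$ if $\alpha>1$. Phase 1: indices $i=s,s+1,\dots$ are processed by the processors; for index $i$ a coin with heads probability $W_s/W_i'$ is flipped; on heads, the host of sample $i$ is drawn from $P_1(h)=\deg_s(h)^\alpha/W_s$ (rejection sampling from the proposal list as it was at the start of the batch); on tails,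 a shared variable $l$ is set to $\min\{l,i\}$ (initially $l=N+1$) and processing of indices $\ge l$ stops. Phase 2: all samples with index $<l$ are added to the graph and the proposal list is updated. Phase 3: for sample $l$ (if any), with probability $(W_l-W_s)/(W_l'-W_s)$ the host is drawn from $P_2(h)=(\deg_l(h)^\alpha-\deg_s(h)^\alpha)/(W_l-W_s)$, and otherwise from $P_3(h)=\deg_l(h)^\alpha/W_l$; the node and edge are added and the proposal list updated. Then the next batch starts with $s\gets l$. *)

(* Defs.v *)
From mathcomp Require Import all_boot all_order all_algebra.
From mathcomp Require Import reals exp.
Set Implicit Arguments.
Unset Strict Implicit.
Unset Printing Implicit Defensive.
Import Order.TTheory GRing.Theory Num.Theory.
Local Open Scope ring_scope.

Section Dist.
Variable R : realType.

Definition dist (T : Type) := seq (R * T).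
Definition dret (T : Type) (x : T) : dist T := [:: (1, x)].
Definition dbind (T U : Type) (d : dist T) (f : T -> dist U) : dist U :=
  flatten [seq [seq (p.1 * q.1, q.2) | q <- f p.2] | p <- d].
Definition dcoin (p : R) : dist bool := [:: (p, true); (1 - p, false)].
Definition prob (T : Type) (d : dist T) (E : pred T) : R :=
  \sum_(p <- d) p.1 * (E p.2)%:R.
Definition ddraw (n : nat) (w : nat -> R) (tot : R) : dist nat :=
  [seq (w v / tot, v) | v <- iota 0 n].
End Dist.
Arguments dret {R T}.
Arguments dbind {R T U}.
Arguments dcoin {R}.

(* Nodes are natural numbers; the seed graph G_0 has nodes 0..n0-1 and  *)
(* seed degrees d0 (d0 v = 0 for v >= n0).  A history [hs] is the list  *)
(* of hosts of samples 1..size hs; sample j adds node n0 + j - 1,       *)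
(* attached to host hs_(j-1).                                           *)

Definition seed_deg (n0 : nat) (e : rel 'I_n0) (v : nat) : nat :=
  #|[set u : 'I_n0 | [exists x : 'I_n0, (val x == v) && e x u]]|.

Section PolyPA.
Variable R : realType.
Variable alpha : R.
Variable n0 : nat.
Variable d0 : nat -> nat.
Variable N : nat. (* total number of samples *)

Definition nnodes (hs : seq nat) : nat := n0 + size hs.
Definition deg (hs : seq nat) (v : nat) : nat :=
  d0 v + (n0 <= v < nnodes hs)%N + count (pred1 v) hs.
Definition wt (hs : seq nat) (v : nat) : R := (deg hs v)%:R `^ alpha.
Definition Wt (hs : seq nat) : R := \sum_(v <- iota 0 (nnodes hs)) wt hs v.
Definition maxdeg (hs : seq nat) : nat := \max_(v <- iota 0 (nnodes hs)) deg hs v.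

(* W'_i for a batch starting from history hs (so s = size hs + 1),
   with t = i - s *)
Definition Wbound (hs : seq nat) (t : nat) : R :=
  if alpha <= 1 then Wt hs + 2 * t%:R
  else Wt hs + 2 * (((maxdeg hs + t)%:R `^ alpha) - ((maxdeg hs)%:R `^ alpha)).

Definition P1 (hs : seq nat) : dist R nat := ddraw (nnodes hs) (wt hs) (Wt hs).
Definition P2 (hs hs' : seq nat) : dist R nat :=
  ddraw (nnodes hs') (fun v => wt hs' v - wt hs v) (Wt hs' - Wt hs).
Definition P3 (hs' : seq nat) : dist R nat := ddraw (nnodes hs') (wt hs') (Wt hs').

(* Phase 1 of a batch starting from history hs, processing offsets
   t, t+1, ..., t+m-1 (indices i = s+t, ...).  Returns the hosts of the
   heads samples (indices < l) and whether a tails occurred (l <= N);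
   in that case l = s + (number of heads samples). *)
Fixpoint phase1 (hs : seq nat) (m t : nat) : dist R (seq nat * bool) :=
  match m with
  | 0 => dret ([::], false)
  | m'.+1 =>
      dbind (dcoin (Wt hs / Wbound hs t)) (fun b =>
        if b then
          dbind (P1 hs) (fun h =>
          dbind (phase1 hs m' t.+1) (fun r => dret (h :: r.1, r.2)))
        else dret ([::], true))
  end.

Definition batch (hs : seq nat) : dist R (seq nat) :=
  dbind (phase1 hs (N - size hs) 0) (fun r =>
    let hs' := hs ++ r.1 in           (* Phase 2: samples with index < l *)
    if r.2 then                        (* Phase 3: sample l *)
      let t := size r.1 in             (* t = l - s *)
      dbind (dcoin ((Wt hs' - Wt hs) / (Wbound hs t - Wt hs))) (fun b =>
        dbind (if b then P2 hs hs' else P3 hs') (fun h => dret (rcons hs' h)))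
    else dret hs').

(* Repeated batches (each batch adds at least one sample, so N rounds
   of fuel suffice). *)
Fixpoint run (fuel : nat) (hs : seq nat) : dist R (seq nat) :=
  match fuel with
  | 0 => dret hs
  | f.+1 => if (N <= size hs)%N then dret hs else dbind (batch hs) (run f)
  end.

Definition ParPolyPA : dist R (seq nat) := run N [::].

End PolyPA.

(* Main.v *)
Require Import Defs.
From mathcomp Require Import all_boot all_order all_algebra.
From mathcomp Require Import reals exp.
From mathcomp Require Import ring lra zify.
Set Implicit Arguments.
Unset Strict Implicit.
Unset Printing Implicit Defensive.
Import Order.TTheory GRing.Theory Num.Theory.
Local Open Scope ring_scope.

Section DistLemmas.
Variable R : realType.

Definition Ex (T : Type) (d : dist R T) (g : T -> R) : R :=
  \sum_(p <- d) p.1 * g p.2.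

Lemma Ex_dret (T : Type) (x : T) g : Ex (dret x) g = g x.
Proof. by rewrite /Ex /dret big_seq1 mul1r. Qed.

Lemma Ex_dbind (T U : Type) (d : dist R T) (f : T -> dist R U) g :
  Ex (dbind d f) g = Ex d (fun x => Ex (f x) g).
Proof.
rewrite /Ex /dbind big_flatten big_map /=; apply: eq_bigr => p _.
by rewrite big_map mulr_sumr; apply: eq_bigr => q _ /=; rewrite mulrA.
Qed.

Lemma Ex_coin (p : R) g : Ex (dcoin p) g = p * g true + (1 - p) * g false.
Proof. by rewrite /Ex /dcoin big_cons big_seq1. Qed.

Lemma Ex_ddraw n w tot g :
  Ex (ddraw n w tot) g = \sum_(v <- iota 0 n) w v / tot * g v.
Proof. by rewrite /Ex /ddraw big_map. Qed.

Definition Supp (T : eqType) (P : T -> Prop) (d : dist R T) :=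
  forall p, p \in d -> P p.2.

Lemma Ex_ext (T : eqType) (d : dist R T) g g' :
  Supp (fun x => g x = g' x) d -> Ex d g = Ex d g'.
Proof. by move=> H; rewrite /Ex; apply: eq_big_seq => p /H ->. Qed.

Lemma Supp_dret (T : eqType) (P : T -> Prop) x : P x -> Supp P (dret x).
Proof. by move=> Px p; rewrite inE => /eqP ->. Qed.

Lemma Supp_dbind (T U : eqType) (Q : T -> Prop) (P : U -> Prop) d f :
  Supp Q d -> (forall x, Q x -> Supp P (f x)) -> Supp P (dbind d f).
Proof.
move=> Hd Hf p /flattenP [s /mapP [q qd ->]] /mapP [r rf ->] /=.
exact: (Hf _ (Hd _ qd) r).
Qed.

Lemma Supp_coin (P : bool -> Prop) (q : R) : P true -> P false -> Supp P (dcoin q).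
Proof. by move=> Pt Pf p; rewrite !inE => /orP [] /eqP ->. Qed.

Lemma Supp_ddraw n w tot : Supp (fun v => (v < n)%N) (ddraw n w tot).
Proof. by move=> p /mapP [v]; rewrite mem_iota => /andP [_ vn] ->. Qed.

Lemma Supp_weaken (T : eqType) (P Q : T -> Prop) d :
  (forall x, P x -> Q x) -> Supp P d -> Supp Q d.
Proof. by move=> PQ H p /H /PQ. Qed.

End DistLemmas.

Section Model.
Variables (R : realType) (alpha : R) (n0 : nat) (d0 : nat -> nat) (N : nat).
Hypothesis alpha_gt0 : 0 < alpha.
Hypothesis d0_out : forall v, (n0 <= v)%N -> d0 v = 0%N.
Hypothesis seed_pos : exists2 x, (x < n0)%N & (0 < d0 x)%N.

Local Notation nn := (nnodes n0).
Local Notation dg := (deg n0 d0).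
Local Notation w := (wt alpha n0 d0).
Local Notation W := (Wt alpha n0 d0).
Local Notation Wb := (Wbound alpha n0 d0).

Lemma wt_ge0 hs v : 0 <= w hs v.
Proof. exact: powR_ge0. Qed.

Lemma wt_gt0 hs v : (0 < dg hs v)%N -> 0 < w hs v.
Proof. by move=> H; apply: powR_gt0; rewrite ltr0n. Qed.

Lemma Wt_gt0 hs : 0 < W hs.
Proof.
case: seed_pos => x xn dx.
have xin : x \in iota 0 (nn hs) by rewrite mem_iota /nnodes; lia.
rewrite /Wt (bigD1_seq x xin (iota_uniq _ _)) /=.
apply: (@lt_le_trans _ _ (w hs x)).
  by apply: wt_gt0; rewrite /deg; lia.
by rewrite lerDl sumr_ge0 // => i _; apply: wt_ge0.
Qed.

Lemma Wt_neq0 hs : W hs != 0.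
Proof. by rewrite gt_eqF // Wt_gt0. Qed.

Lemma deg_mono hs r v : (dg hs v <= dg (hs ++ r) v)%N.
Proof.
rewrite /deg /nnodes count_cat size_cat.
case: (n0 <= v)%N => /=; last lia.
have [h1|h1] := ltnP v (n0 + size hs); rewrite ?h1.
  by rewrite (_ : (v < n0 + (size hs + size r))%N = true) /=; lia.
case: (v < n0 + (size hs + size r))%N => /=; lia.
Qed.

Lemma wt_mono hs r v : w hs v <= w (hs ++ r) v.
Proof.
apply: (ge0_ler_powR (ltW alpha_gt0)); rewrite ?nnegrE ?ler0n //.
rewrite ler_nat; exact: deg_mono.
Qed.

Lemma Wt_lt (hs r : seq nat) : r != [::] -> W hs < W (hs ++ r).
Proof.
case: r => [//|a r] _.
rewrite /Wt {2}/nnodes size_cat addnA iotaD big_cat /= big_cons add0n.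
rewrite -[ltLHS]addr0; apply: ler_ltD.
  by apply: ler_sum => v _; apply: wt_mono.
rewrite -[ltLHS]addr0; apply: ltr_leD.
  by apply: wt_gt0; rewrite /deg /nnodes size_cat /=; lia.
by apply: sumr_ge0 => v _; apply: wt_ge0.
Qed.

Lemma Wbound0 hs : Wb hs 0 = W hs.
Proof. by rewrite /Wbound; case: ifP => _; rewrite ?addn0 ?subrr mulr0 addr0. Qed.

Lemma Wbound_gt hs t : (0 < t)%N -> W hs < Wb hs t.
Proof.
move=> t0; rewrite /Wbound; case: ifP => _; rewrite ltrDl.
  by rewrite mulr_gt0 // ltr0n.
rewrite mulr_gt0 // subr_gt0; apply: gt0_ltr_powR; rewrite ?nnegrE ?ler0n //.
by rewrite ltr_nat; lia.
Qed.

Definition valid (x : seq nat) := forall j, (j < size x)%N -> (nth 0%N x j < n0 + j)%N.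

Lemma valid_nil : valid [::].
Proof. by move=> j. Qed.

Lemma valid_cat (x r : seq nat) : valid x -> all (fun v => v < nn x)%N r -> valid (x ++ r).
Proof.
move=> vx /allP ar j; rewrite size_cat nth_cat => jlt.
case: (ltnP j (size x)) => js /=; first exact: vx.
have : (nth 0%N r (j - size x) < nn x)%N.
  have jr : (j - size x < size r)%N by move: js jlt; lia.
  by apply: ar; apply: mem_nth jr.
rewrite /nnodes; move: js; lia.
Qed.

Lemma valid_take k x : valid x -> valid (take k x).
Proof.
move=> vx j; rewrite size_take => jlt; rewrite nth_take; last by move: jlt; case: ifP; lia.
apply: vx; move: jlt; case: ifP; lia.
Qed.

Lemma valid_count (x : seq nat) (h : nat) : valid x -> (nn x <= h)%N -> count (pred1 h) x = 0%N.
Proof.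
move=> vx hx; apply/count_memPn/negP => /(nthP 0%N) [j js hj].
have js' : (j < size x)%N := js.
have := vx j js'; rewrite hj; move: hx js'; rewrite /nnodes; lia.
Qed.

Lemma wt_out x h : valid x -> (nn x <= h)%N -> w x h = 0.
Proof.
move=> vx hx; rewrite /wt /deg valid_count // d0_out; last by move: hx; rewrite /nnodes; lia.
have -> : (n0 <= h < nn x)%N = false by apply/negbTE; rewrite negb_and -leqNgt hx orbT.
by rewrite powR0 // gt_eqF.
Qed.

Lemma sum_pred1 (F : nat -> R) n h :
  \sum_(v <- iota 0 n | v == h) F v = if (h < n)%N then F h else 0.
Proof.
case: ifP => hn.
  have hin : h \in iota 0 n by rewrite mem_iota.
  rewrite big_mkcond (bigD1_seq h hin (iota_uniq _ _)) /= eqxx big1 ?addr0 //.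
  by move=> v /negbTE ->.
by rewrite big1_seq // => v /andP [/eqP -> ]; rewrite mem_iota hn andbF.
Qed.

Fixpoint J (n : nat) (g : seq nat -> R) (x : seq nat) : R :=
  if n is n'.+1 then \sum_(v <- iota 0 (nn x)) w x v / W x * J n' g (rcons x v)
  else g x.

Lemma sum_rho x : \sum_(v <- iota 0 (nn x)) w x v / W x = 1.
Proof. by rewrite -mulr_suml divff // Wt_neq0. Qed.

Lemma J_take n (x : seq nat) j (psi : seq nat -> R) : (j <= size x)%N ->
  J n (fun z => psi (take j z)) x = psi (take j x).
Proof.
elim: n x => [//|n IH] x jx /=.
under eq_bigr => v _.
  rewrite IH ?size_rcons; last by apply: leqW.
  rewrite -cats1 takel_cat //.
  over.
by rewrite -mulr_suml sum_rho mul1r.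
Qed.

Lemma J_cond n (x : seq nat) k (hist : seq nat) h :
  (size x <= k < size x + n)%N -> size hist = k ->
  J n (fun z => ((take k.+1 z == rcons hist h) : nat)%:R) x =
  (if (h < nn hist)%N then w hist h / W hist else 0) *
  J n (fun z => ((take k z == hist) : nat)%:R) x.
Proof.
elim: n x => [|n IH] x; first by rewrite addn0; lia.
move=> /andP [xk kx] hk.
have [xk'|xk'] := eqVneq (size x) k.
  rewrite (@J_take n.+1 x k (fun z => ((z == hist) : nat)%:R)); last by rewrite xk'.
  rewrite /= (_ : take k x = x); last by rewrite -xk' take_size.
  under eq_bigr => v _.
    rewrite (@J_take n (rcons x v) k.+1 (fun z => ((z == rcons hist h) : nat)%:R)); last by rewrite size_rcons xk'.
    rewrite take_oversize ?size_rcons ?xk' // eqseq_rcons.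
    over.
  have [->|xh] := eqVneq x hist; last first.
    by rewrite mulr0 big1 // => v _; rewrite /= mulr0.
  rewrite mulr1 /=.
  under eq_bigr => v _.
    rewrite (_ : _ * _ = if v == h then w hist v / W hist else 0); last first.
      by case: (v == h); rewrite ?mulr1 ?mulr0.
    over.
  by rewrite -big_mkcond sum_pred1.
have xk2 : (size x < k)%N by rewrite ltn_neqAle xk' xk.
rewrite /= mulr_sumr; apply: eq_bigr => v _.
rewrite IH ?size_rcons //; first by rewrite mulrCA.
by rewrite xk2 /=; move: kx; lia.
Qed.

Lemma Ex_eq (T : Type) (d : dist R T) g g' : g =1 g' -> Ex d g = Ex d g'.
Proof. by move=> H; rewrite /Ex; apply: eq_bigr => p _; rewrite H. Qed.

Local Notation Ph1 := (phase1 alpha n0 d0).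

Definition Phi3 (G : seq nat -> R) hs r :=
  let x := hs ++ r in
  let q := (W x - W hs) / (Wb hs (size r) - W hs) in
  q * Ex (P2 alpha n0 d0 hs x) (fun v => G (rcons x v)) +
  (1 - q) * Ex (P3 alpha n0 d0 x) (fun v => G (rcons x v)).

Definition harmonic (G : seq nat -> R) := forall x, (size x < N)%N ->
  G x = \sum_(v <- iota 0 (nn x)) w x v / W x * G (rcons x v).

Lemma phase1_Ex G : harmonic G -> forall hs, valid hs -> forall m r,
  (size hs + size r + m = N)%N ->
  Ex (Ph1 hs m (size r))
     (fun rb => if rb.2 then Phi3 G hs (r ++ rb.1) else G (hs ++ (r ++ rb.1)))
  = G (hs ++ r).
Proof.
move=> harm hs vhs; elim=> [|m IH] r Hs.
  by rewrite /= Ex_dret /= cats0.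
rewrite /= Ex_dbind Ex_coin /= Ex_dret /= cats0.
rewrite Ex_dbind.
set x := hs ++ r.
rewrite (_ : Ex (P1 alpha n0 d0 hs) _ = Ex (P1 alpha n0 d0 hs) (fun v => G (rcons x v))); last first.
  apply: Ex_eq => v; rewrite Ex_dbind.
  rewrite /x rcons_cat -(IH (rcons r v)); last by rewrite size_rcons; move: Hs; lia.
  rewrite size_rcons.
  by apply: Ex_eq => rb; rewrite Ex_dret /= cat_rcons.
have xN : (size x < N)%N by rewrite /x size_cat; move: Hs; lia.
rewrite (harm x xN) /Phi3 -/x /P1 /P2 /P3 !Ex_ddraw.
have -> : \sum_(v <- iota 0 (nn hs)) w hs v / W hs * G (rcons x v) =
          \sum_(v <- iota 0 (nn x)) w hs v / W hs * G (rcons x v).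
  rewrite {2}/nnodes /x size_cat addnA iotaD big_cat /=.
  rewrite [X in _ = _ + X]big1_seq ?addr0 // => v /andP [_].
  by rewrite mem_iota => /andP [hv _]; rewrite wt_out // !mul0r.
rewrite !mulr_sumr -!big_split /= mulr_sumr -big_split /=; apply: eq_bigr => v _.
have [r0|rpos] := eqVneq r [::].
  rewrite /x r0 cats0 /= Wbound0 divff ?Wt_neq0 // subrr !mul0r addr0 mul1r.
  by [].
have rs : (0 < size r)%N by case: r rpos {x xN Hs IH}.
have h1 := Wt_neq0 hs.
have h2 := Wt_neq0 x.
have h3 : Wb hs (size r) != 0 by rewrite gt_eqF // (lt_trans (Wt_gt0 hs)) // Wbound_gt.
have h4 : Wb hs (size r) - W hs != 0 by rewrite subr_eq0 gt_eqF // Wbound_gt.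
have h5 : W x - W hs != 0 by rewrite subr_eq0 gt_eqF // Wt_lt.
by field; rewrite h1 h2 h3 h4 h5.
Qed.

Local Notation Bt := (batch alpha n0 d0 N).
Local Notation Rn := (run alpha n0 d0 N).

Lemma batch_Ex G hs : harmonic G -> valid hs -> (size hs < N)%N ->
  Ex (Bt hs) G = G hs.
Proof.
move=> harm vhs hN.
transitivity (G (hs ++ [::])); last by rewrite cats0.
rewrite /batch Ex_dbind -(@phase1_Ex G harm hs vhs (N - size hs) [::]) /=; last first.
  by move: hN; lia.
apply: Ex_eq => [[r1 b]] /=; case: b.
  rewrite Ex_dbind Ex_coin /= !Ex_dbind /Phi3 /=.
  by congr (_ * _ + _ * _); apply: Ex_eq => v; rewrite Ex_dret.
by rewrite Ex_dret.
Qed.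

Lemma phase1_supp hs m (t : nat) :
  Supp (fun rb => all (fun v => v < nn hs)%N rb.1 /\
                  (if rb.2 then (size rb.1 < m)%N else (size rb.1 == m))) (Ph1 hs m t).
Proof.
elim: m t => [|m IH] t /=; first by apply: Supp_dret.
apply: (Supp_dbind (Q := fun _ => True)); first by apply: Supp_coin.
case=> _.
  apply: (Supp_dbind (Q := fun v => (v < nn hs)%N)); first exact: Supp_ddraw.
  move=> v vn.
  apply: Supp_dbind (IH t.+1) _ => [[r1 b]] /= [ar hb].
  apply: Supp_dret => /=; split; first by rewrite vn ar.
  by case: b hb => /= hb; lia.
by apply: Supp_dret.
Qed.

Lemma batch_supp hs : valid hs -> (size hs < N)%N ->
  Supp (fun x => valid x /\ (size hs < size x <= N)%N) (Bt hs).
Proof.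
move=> vhs hN; rewrite /batch.
eapply Supp_dbind; first exact: phase1_supp.
move=> [r1 b] /= [ar hb].
have vx : valid (hs ++ r1) := valid_cat vhs ar.
case: b hb => hb.
  apply: (Supp_dbind (Q := fun _ => True)); first by apply: Supp_coin.
  move=> b' _.
  apply: (Supp_dbind (Q := fun v => (v < nn (hs ++ r1))%N)).
    by case: b'; apply: Supp_ddraw.
  move=> v vn; apply: Supp_dret; split.
    by rewrite -cats1; apply: valid_cat => //=; rewrite vn.
  by rewrite size_rcons size_cat; move: hb hN; lia.
apply: Supp_dret; split => //; rewrite size_cat (eqP hb); move: hN; lia.
Qed.

Lemma run_supp f hs : valid hs -> Supp valid (Rn f hs).
Proof.
elim: f hs => [|f IH] hs vhs /=; first by apply: Supp_dret.
case: ifP => HN; first by apply: Supp_dret.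
apply: Supp_dbind (batch_supp vhs _) _; first by rewrite ltnNge HN.
by move=> x [vx _]; apply: IH.
Qed.

Lemma run_Ex g f hs : valid hs -> (size hs <= N)%N -> (N - size hs <= f)%N ->
  Ex (Rn f hs) g = J (N - size hs) g hs.
Proof.
elim: f hs => [|f IH] hs vhs hN hf /=.
  by rewrite Ex_dret (_ : (N - size hs = 0)%N) //; move: hf; lia.
case: ifP => HN.
  by rewrite Ex_dret (_ : (N - size hs = 0)%N) //; move: HN hN; lia.
have hN' : (size hs < N)%N by rewrite ltnNge HN.
rewrite Ex_dbind (@Ex_ext _ _ _ _ (fun x => J (N - size x) g x)).
  apply: batch_Ex => // x xN.
  rewrite (_ : (N - size x = (N - size x).-1.+1)%N) /=; last by move: xN; lia.
  apply: eq_bigr => v _; rewrite size_rcons; do 2 f_equal; move: xN; lia.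
apply: Supp_weaken (batch_supp vhs hN') => x [vx /andP [h1 h2]].
apply: IH => //.
have h1' : (size hs < size (x : seq nat))%N := h1.
have h2' : (size (x : seq nat) <= N)%N := h2.
move: h1' h2' hf; clear; lia.
Qed.

End Model.

Unset Implicit Arguments.
Set Strict Implicit.

Theorem theorem4 (R : realType) (alpha : R) (n0 : nat) (e : rel 'I_n0)
    (N : nat) :
  0 < alpha ->
  symmetric e -> irreflexive e -> (exists x y : 'I_n0, e x y) ->
  let d0 := seed_deg e in
  let out := ParPolyPA alpha n0 d0 N in
  forall (i : nat) (hist : seq nat) (h : nat),
    (1 <= i <= N)%N -> size hist = i.-1 ->
    0 < prob out (fun hs => take i.-1 hs == hist) ->
    prob out (fun hs => take i hs == rcons hist h)
      / prob out (fun hs => take i.-1 hs == hist)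
    = wt alpha n0 d0 hist h / Wt alpha n0 d0 hist.
Proof.
move=> apos _ _ [x0 [y0 exy]] d0 out i hist h /andP [i1 iN] hsz hpos.
have d0_out : forall v, (n0 <= v)%N -> d0 v = 0%N.
  move=> v nv; apply/eqP; rewrite /d0 /seed_deg cards_eq0; apply/eqP/setP => u.
  rewrite !inE; apply/negbTE/existsPn => x.
  by rewrite (_ : (val x == v) = false) //; apply/negbTE; rewrite neq_ltn (leq_trans (ltn_ord x) nv).
have seed_pos : exists2 x, (x < n0)%N & (0 < d0 x)%N.
  exists (val x0); first exact: ltn_ord.
  rewrite /d0 /seed_deg; apply/card_gt0P; exists y0; rewrite inE.
  by apply/existsP; exists x0; rewrite eqxx exy.
set k := i.-1 in hsz hpos *.
have ik : i = k.+1 by rewrite /k; move: i1; lia.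
rewrite ik.
have v0 : valid n0 [::] by move=> j.
have probE : forall E, prob out E = Ex out (fun z => (E z : nat)%:R) by [].
have outE : forall g, Ex out g = J alpha n0 d0 N g [::].
  move=> g; rewrite /out /ParPolyPA (run_Ex apos d0_out seed_pos) ?subn0 //.
rewrite !probE !outE in hpos *.
rewrite (J_cond apos seed_pos) //; last by rewrite /=; move: i1 iN; rewrite /k; lia.
have Pn0 : J alpha n0 d0 N (fun z => ((take k z == hist) : nat)%:R) [::] != 0 by rewrite gt_eqF.
case: ifP => hn; first by rewrite mulfK.
have vh : valid n0 hist.
  move: hpos; rewrite -outE.
  case: (boolP (has (fun p => take k p.2 == hist) out)) => [/hasP [p pin /eqP <-] _|hn'].
    apply: (valid_take apos); apply: (run_supp apos v0 pin).
  rewrite /Ex big1_seq ?ltxx // => p /andP [_ pin].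
  by move/hasPn: hn' => /(_ p pin) /negbTE ->; rewrite mulr0.
by rewrite mul0r (wt_out apos d0_out vh) ?mul0r // leqNgt hn.
Qed.
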